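(* In a distributive quasi-orthomodular nearsemilattice $A$, every initial segment $[0,p] = \{x \in A : x \le p\}$ is a Boolean algebra.
   Context: A nearsemilattice is a poset $A$ with least element $0$ in which any two elements having a common upper bound have a join $x \vee y$ (a partial operation). It is distributive if whenever $y \vee z$ exists and $x \le y \vee z$, then $x = y' \vee z'$ for some $y' \le y$ and $z' \le z$. An orthogonality on $A$ is a binary relation $\perp$ with: $x \perp y$ implies $y \perp x$; $x \le y$ and $y \perp z$ imply $x \perp z$; $x \perp 0$ for all $x$. A quasi-orthomodular nearsemilattice is a nearsemilattice with an orthogonality such that: (a) if $x \perp y$ then $x \vee y$ exists; (b) if $x \le y$ then $y = x \vee z$ for some $z$ with $x \perp z$; (c) if $x \perp y$, $x \perp z$ and $y \le x \vee z$, then $y \le z$. *)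

(* Defs.v *)
Section Defs.
Variable A : Type.
Variable le : A -> A -> Prop.

Definition partial_order : Prop :=
  (forall x, le x x) /\
  (forall x y z, le x y -> le y z -> le x z) /\
  (forall x y, le x y -> le y x -> x = y).

Definition is_join (x y j : A) : Prop :=
  le x j /\ le y j /\ forall w, le x w -> le y w -> le j w.

Definition nearsemilattice (zero : A) : Prop :=
  partial_order /\
  (forall x, le zero x) /\
  (forall x y u, le x u -> le y u -> exists j, is_join x y j).

Definition distributive_ns : Prop :=
  forall x y z j, is_join y z j -> le x j ->
    exists y' z', le y' y /\ le z' z /\ is_join y' z' x.

Definition orthogonality (zero : A) (perp : A -> A -> Prop) : Prop :=
  (forall x y, perp x y -> perp y x) /\
  (forall x y z, le x y -> perp y z -> perp x z) /\
  (forall x, perp x zero).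

Definition quasi_orthomodular_ns (zero : A) (perp : A -> A -> Prop) : Prop :=
  nearsemilattice zero /\ orthogonality zero perp /\
  (* (a) *) (forall x y, perp x y -> exists j, is_join x y j) /\
  (* (b) *) (forall x y, le x y -> exists z, perp x z /\ is_join x z y) /\
  (* (c) *) (forall x y z j, perp x y -> perp x z -> is_join x z j ->
                le y j -> le y z).

Definition is_join_in (S : A -> Prop) (x y j : A) : Prop :=
  S j /\ le x j /\ le y j /\ forall w, S w -> le x w -> le y w -> le j w.

Definition is_meet_in (S : A -> Prop) (x y m : A) : Prop :=
  S m /\ le m x /\ le m y /\ forall w, S w -> le w x -> le w y -> le w m.

Definition boolean_algebra_on (S : A -> Prop) : Prop :=
  exists (join meet : A -> A -> A) (compl : A -> A) (bot top : A),
    S bot /\ S top /\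
    (forall x, S x -> le bot x /\ le x top) /\
    (forall x y, S x -> S y -> is_join_in S x y (join x y)) /\
    (forall x y, S x -> S y -> is_meet_in S x y (meet x y)) /\
    (forall x y z, S x -> S y -> S z ->
       meet x (join y z) = join (meet x y) (meet x z)) /\
    (forall x, S x -> S (compl x) /\
       join x (compl x) = top /\ meet x (compl x) = bot).

Definition segment (p : A) : A -> Prop := fun x => le x p.

End Defs.

(* Main.v *)
Require Import Defs.
From Stdlib Require Import ClassicalEpsilon.

Theorem corollary5 (A : Type) (le : A -> A -> Prop) (zero : A)
    (perp : A -> A -> Prop) :
  quasi_orthomodular_ns A le zero perp ->
  distributive_ns A le ->
  forall p : A, boolean_algebra_on A le (segment A le p).
Proof.
  intros [[[Hrefl [Htrans Hanti]] [H0 Hjex]] [[Psym [Pdown P0]] [Ha [Hb Hc]]]] Hd p.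
  unfold segment.
  set (S := fun x => le x p).
  assert (Inh : inhabited A) by exact (inhabits zero).
  set (join := fun x y => epsilon Inh (fun j => is_join A le x y j)).
  set (meet := fun x y => epsilon Inh (fun m => is_meet_in A le S x y m)).
  set (compl := fun x => epsilon Inh (fun z => perp x z /\ is_join A le x z p)).
  assert (Juniq : forall x y j j', is_join A le x y j -> is_join A le x y j' -> j = j').
  { intros x y j j' [h1 [h2 h3]] [k1 [k2 k3]]. apply Hanti; auto. }
  assert (Jspec : forall x y, S x -> S y -> is_join A le x y (join x y)).
  { intros x y hx hy. unfold join. apply epsilon_spec. eapply Hjex; eauto. }
  assert (JS : forall x y, S x -> S y -> S (join x y)).
  { intros x y hx hy. destruct (Jspec x y hx hy) as [_ [_ h]]. apply h; auto. }
  assert (Pzero : forall w, perp w w -> w = zero).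
  { intros w hw. apply Hanti; [|apply H0].
    apply (Hc w w zero w hw (P0 w)).
    - split; [apply Hrefl|split; [apply H0|auto]].
    - apply Hrefl. }
  assert (Cspec : forall x, S x -> perp x (compl x) /\ is_join A le x (compl x) p).
  { intros x hx. unfold compl. apply epsilon_spec. apply Hb. exact hx. }
  assert (Mex : forall x y, S x -> S y -> exists m, is_meet_in A le S x y m).
  { intros x y hx hy.
    destruct (Cspec y hy) as [py jy].
    destruct (Hd x y (compl y) p jy hx) as [a [b [ha [hb [j1 [j2 j3]]]]]].
    exists a. split; [|split; [exact j1|split; [exact ha|]]].
    - unfold S. apply (Htrans _ x); auto.
    - intros w hw wx wy.
      assert (bperpy : perp b y).
      { apply Psym. apply (Pdown y y b); [apply Hrefl|].
        apply Psym. apply (Pdown b (compl y) y hb). apply Psym. exact py. }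
      apply (Hc b w a x).
      + apply Psym. apply (Pdown w y b wy). apply Psym. exact bperpy.
      + apply Psym. apply (Pdown a y b ha). apply Psym. exact bperpy.
      + split; [exact j2|split; [exact j1|]]. intros u u1 u2. apply j3; auto.
      + exact wx. }
  assert (Mspec : forall x y, S x -> S y -> is_meet_in A le S x y (meet x y)).
  { intros x y hx hy. unfold meet. apply epsilon_spec. apply Mex; auto. }
  exists join, meet, compl, zero, p.
  split; [apply H0|]. split; [apply Hrefl|].
  split; [intros x hx; split; [apply H0|exact hx]|].
  split.
  { intros x y hx hy. destruct (Jspec x y hx hy) as [h1 [h2 h3]].
    split; [apply JS; auto|split; [auto|split; [auto|]]]. intros w _ ; apply h3. }
  split; [exact Mspec|].
  split.
  { intros x y z hx hy hz.
    assert (Syz := JS y z hy hz).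
    destruct (Mspec x (join y z) hx Syz) as [m0 [m1 [m2 m3]]].
    destruct (Mspec x y hx hy) as [a0 [a1 [a2 a3]]].
    destruct (Mspec x z hx hz) as [b0 [b1 [b2 b3]]].
    destruct (Jspec y z hy hz) as [k1 [k2 k3]].
    destruct (Jspec (meet x y) (meet x z) a0 b0) as [l1 [l2 l3]].
    apply Hanti.
    - destruct (Hd _ y z _ (Jspec y z hy hz) m2) as [y' [z' [hy' [hz' [q1 [q2 q3]]]]]].
      apply q3.
      + apply (Htrans _ (meet x y)); auto. apply a3.
        * apply (Htrans _ y); auto.
        * apply (Htrans _ _ _ q1 m1).
        * exact hy'.
      + apply (Htrans _ (meet x z)); auto. apply b3.
        * apply (Htrans _ z); auto.
        * apply (Htrans _ _ _ q2 m1).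
        * exact hz'.
    - apply l3; apply m3.
      + exact a0.
      + exact a1.
      + apply (Htrans _ y); auto.
      + exact b0.
      + exact b1.
      + apply (Htrans _ z); auto. }
  intros x hx. destruct (Cspec x hx) as [px jx].
  assert (Sc : S (compl x)) by (destruct jx as [_ [h _]]; exact h).
  split; [exact Sc|]. split.
  - apply (Juniq x (compl x)); auto.
  - destruct (Mspec x (compl x) hx Sc) as [m0 [m1 [m2 m3]]].
    apply Pzero. apply (Pdown _ x); auto. apply Psym. apply (Pdown _ (compl x)); auto.
Qed.
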